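(* Let $D$ be a locatable digraph and let $v$ be a vertex of $D$ that is neither domination-forced nor location-forced. Then $V(D)\setminus\{v\}$ is an open neighbourhood locating-dominating set of $D$.
   Context: Digraphs are finite and may contain loops; between two distinct vertices $u,v$ there may be the arc $uv$, the arc $vu$, or both, but no arc is repeated. For a vertex $v$, $N^-(v)=\{u : uv \text{ is an arc}\}$ is its (open) in-neighbourhood (it contains $v$ iff $v$ has a loop). A set $S\subseteq V(D)$ is an open neighbourhood locating-dominating set (OLD set) of $D$ if every vertex of $D$ has an in-neighbour in $S$, and for every pair of distinct vertices $u,w$ there is a vertex of $S$ lying in exactly one of $N^-(u)$, $N^-(w)$. $D$ is locatable if it admits an OLD set. A vertex $v$ is domination-forced if there is a vertex $w$ with $N^-(w)=\{v\}$; it is location-forced if there are two distinct vertices $x,y$ with $N^-(x)\ominus N^-(y)=\{v\}$, where $\ominus$ denotes symmetric difference. *)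

(* Defs.v *)
From mathcomp Require Import all_boot.
Set Implicit Arguments. Unset Strict Implicit. Unset Printing Implicit Defensive.

(* A digraph on a finite vertex type T is given by its arc relation
   [arc : rel T]; [arc u v] means uv is an arc. Loops allowed
   ([arc v v] may hold); no multiple arcs (a relation). *)

Definition in_nbhd (T : finType) (arc : rel T) (v : T) : {set T} :=
  [set u | arc u v].

Definition is_OLD (T : finType) (arc : rel T) (S : {set T}) : Prop :=
  (forall v : T, exists2 s, s \in S & s \in in_nbhd arc v) /\
  (forall u w : T, u <> w ->
     exists2 s, s \in S &
       (s \in in_nbhd arc u) != (s \in in_nbhd arc w)).

Definition locatable (T : finType) (arc : rel T) : Prop :=
  exists S : {set T}, is_OLD arc S.

Definition symdiff (T : finType) (A B : {set T}) : {set T} :=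
  (A :\: B) :|: (B :\: A).

Definition domination_forced (T : finType) (arc : rel T) (v : T) : Prop :=
  exists w : T, in_nbhd arc w = [set v].

Definition location_forced (T : finType) (arc : rel T) (v : T) : Prop :=
  exists x y : T, x <> y /\ symdiff (in_nbhd arc x) (in_nbhd arc y) = [set v].

(* Main.v *)
Require Import Defs.
From mathcomp Require Import all_boot.

Theorem proposition5 (T : finType) (arc : rel T) (v : T) :
  locatable arc ->
  ~ domination_forced arc v ->
  ~ location_forced arc v ->
  is_OLD arc ([set: T] :\ v).
Proof.
move=> [S [HD HL]] nD nL; split.
- move=> w; case: (pickP [pred t | (t != v) && (t \in in_nbhd arc w)]) => [t /andP [tv tw]|H].
    by exists t => //; rewrite !inE tv.
  exfalso; apply: nD; exists w; apply/setP => t; rewrite inE.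
  case: (HD w) => s _ sw.
  have Hs : s = v by have := H s; rewrite /= sw andbT => /negbFE/eqP.
  case: (eqVneq t v) => [->|tv]; first by rewrite -Hs sw.
  by have := H t; rewrite /= tv.
- move=> u w uw.
  case: (pickP [pred t | (t != v) && ((t \in in_nbhd arc u) != (t \in in_nbhd arc w))]) => [t /andP [tv tw]|H].
    by exists t => //; rewrite !inE tv.
  exfalso; apply: nL; exists u, w; split => //; apply/setP => t.
  rewrite /symdiff !inE.
  case: (HL u w uw) => s _ sd.
  have Hs : s = v.
    by have := H s; rewrite /= sd andbT => /negbFE/eqP.
  case: (eqVneq t v) => [->|tv].
    by move: sd; rewrite Hs /in_nbhd !inE; case: (arc v u); case: (arc v w).
  have := H t; rewrite /= tv /= => /negbFE; rewrite /in_nbhd !inE.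
  by case: (arc t u); case: (arc t w).
Qed.
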